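(* Let $p\in(1,\infty)$, $r,h>0$ and $\phi\in L^\infty(\Omega_r)$. (a) There exists a unique $\psi\in L^\infty(\Omega)$ such that $-L[\psi,\phi](x)=f(x)$ for all $x\in\Omega$. (b) If $\psi_1,\psi_2:\Omega\to\mathbb{R}$ satisfy $-L[\psi_1,\phi](x)\le f(x)$ and $-L[\psi_2,\phi](x)\ge f(x)$ for all $x\in\Omega$, then $\psi_1\le\psi_2$ in $\Omega$.
   Context: $\Omega\subset\mathbb{R}^d$ is a bounded open set, $f\in C(\overline\Omega)$, $\partial\Omega_r:=\{x\in\mathbb{R}^d\setminus\Omega:\operatorname{dist}(x,\Omega)\le r\}$, $\Omega_r=\Omega\cup\partial\Omega_r$. $J_p(t)=|t|^{p-2}t$ ($J_p(0)=0$); $B_r$ open ball of radius $r$ at $0$; $\omega_d=|B_1|$; $D_{d,p}=\frac{d}{2(d+p)}\fint_{\partial B_1}|y_1|^p\,d\sigma(y)$; $\mathcal G_h=h\mathbb Z^d=\{y_\alpha=h\alpha\}$. For $\psi:\Omega\to\mathbb{R}$ and $\phi:\Omega_r\to\mathbb{R}$, \[ L[\psi,\phi](x):=\frac{h^d}{D_{d,p}\,\omega_d\,r^{p+d}}\sum_{y_\alpha\in\mathcal G_h\cap B_r}J_p\big(\phi(x+y_\alpha)-\psi(x)\big),\qquad x\in\Omega. \] *)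

(* Defs.v *)
From HB Require Import structures.
From mathcomp Require Import all_boot all_order all_algebra.
From mathcomp Require Import all_classical all_reals all_analysis.
Set Implicit Arguments. Unset Strict Implicit. Unset Printing Implicit Defensive.
Import Order.TTheory GRing.Theory Num.Theory.
Import numFieldNormedType.Exports.
Local Open Scope classical_set_scope.
Local Open Scope ring_scope.

Section Defs.
Variables (R : realType) (d : nat).

(* Euclidean norm on R^d (the library norm on 'rV is the max norm). *)
Definition enorm (x : 'rV[R]_d) : R := Num.sqrt (\sum_(i < d) x ord0 i ^+ 2).

Definition edist (Omega : set 'rV[R]_d) (x : 'rV[R]_d) : R :=
  inf [set enorm (x - z) | z in Omega].

Definition bdry_r (Omega : set 'rV[R]_d) (r : R) : set 'rV[R]_d :=
  [set x | ~ Omega x /\ edist Omega x <= r].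

Definition Omega_r (Omega : set 'rV[R]_d) (r : R) : set 'rV[R]_d :=
  Omega `|` bdry_r Omega r.

Definition Jp (p t : R) : R := if t == 0 then 0 else powR `|t| (p - 2) * t.

Definition gridpt (h : R) (a : 'rV[int]_d) : 'rV[R]_d :=
  h *: map_mx (fun z : int => z%:~R) a.

Definition grid_ball (h r : R) : set 'rV[int]_d :=
  [set a | enorm (gridpt h a) < r].

(* L[psi,phi](x) with the normalisation D_{d,p} * omega_d replaced by a
   parameter c. *)
Definition Lop (c p r h : R) (psi phi : 'rV[R]_d -> R) (x : 'rV[R]_d) : R :=
  h ^+ d / (c * powR r (p + d%:R)) *
  (\sum_(a \in grid_ball h r) Jp p (phi (x + gridpt h a) - psi x))%R.

End Defs.

(* Main.v *)
Require Import Defs.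
From HB Require Import structures.
From mathcomp Require Import all_boot all_order all_algebra.
From mathcomp Require Import all_classical all_reals all_analysis.
From mathcomp Require Import lra zify.
Import Order.TTheory GRing.Theory Num.Theory.
Import numFieldNormedType.Exports.
Local Open Scope classical_set_scope.
Local Open Scope ring_scope.
Set Implicit Arguments. Unset Strict Implicit.

Section J.
Variable R : realType.
Implicit Types q s t : R.

Definition J q s : R := if s < 0 then - powR (- s) q else powR s q.

Lemma Jp_J p s : 1 < p -> Jp p s = J (p - 1) s.
Proof.
move=> p1; rewrite /Jp /J.
have q0 : 0 < p - 1 by rewrite subr_gt0.
have e : p - 2 = (p - 1) - 1 by rewrite -addrA -opprD.
case: eqP => [->|/eqP s0].
  by rewrite ltxx powR0 // gt_eqF.
case: ltP => sl.
  rewrite ltr0_norm // e.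
  have -> : (- s) `^ (p - 1 - 1) * s = - ((- s) * (- s) `^ (p - 1 - 1)).
    by rewrite mulrC mulNr opprK.
  by rewrite mulr_powRB1 // oppr_ge0 ltW.
rewrite ger0_norm // e mulrC mulr_powRB1 //.
Qed.

Lemma J0 q : 0 < q -> J q 0 = 0.
Proof. by move=> q0; rewrite /J ltxx powR0 // gt_eqF. Qed.



Lemma J_pos q s : 0 <= s -> J q s = powR s q.
Proof. by move=> s0; rewrite /J ltNge s0. Qed.

Lemma J_neg q s : 0 < q -> 0 <= s -> J q (- s) = - powR s q.
Proof.
move=> q0; rewrite le_eqVlt => /orP[/eqP<-|s0].
  by rewrite oppr0 J0 // powR0 ?oppr0 // gt_eqF.
by rewrite /J oppr_lt0 s0 opprK.
Qed.

Definition Jinv q v : R := if v < 0 then - powR (- v) q^-1 else powR v q^-1.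

Lemma JK q v : 0 < q -> J q (Jinv q v) = v.
Proof.
move=> q0; rewrite /Jinv; case: ltP => v0.
  rewrite J_neg // ?powR_ge0 // -powRrM mulVf ?gt_eqF // powRr1 ?opprK //.
  by rewrite oppr_ge0 ltW.
by rewrite J_pos ?powR_ge0 // -powRrM mulVf ?gt_eqF // powRr1.
Qed.

End J.
Lemma J_lt (R : realType) (q s t : R) : 0 < q -> s < t -> J q s < J q t.
Proof.
move=> q0 st; rewrite /J.
case: (ltP s 0) => s0; case: (ltP t 0) => t0.
- have h := (@ltrN2 R ((- s) `^ q) ((- t) `^ q)). rewrite h.
  apply: gt0_ltr_powR => //; rewrite ?nnegrE ?oppr_ge0 ?ltW //.
  lra.
- apply: (@lt_le_trans _ _ 0); last exact: powR_ge0.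
  by rewrite oppr_lt0 powR_gt0 // oppr_gt0.
- by move: (lt_trans st t0); rewrite ltNge s0.
- by apply: gt0_ltr_powR => //; rewrite nnegrE.
Qed.

Lemma J_le (R : realType) (q s t : R) : 0 < q -> s <= t -> J q s <= J q t.
Proof.
move=> q0; rewrite le_eqVlt => /orP[/eqP->//|st]; exact/ltW/J_lt.
Qed.

Lemma J_mono (R : realType) (q : R) : 0 < q -> {mono J q : x y / x <= y}.
Proof. by move=> q0; apply: le_mono => x y; exact: J_lt. Qed.

Lemma J_cont (R : realType) (q : R) : 0 < q -> continuous (J q).
Proof.
move=> q0 x.
have ab : x - 1 < x + 1 by lra.
have xin : x \in `]x - 1, x + 1[ by rewrite in_itv /=; apply/andP; split; lra.
apply: (within_continuous_continuous ab _ xin).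
apply: segment_inc_surj_continuous.
  by move=> u v _ _; rewrite (J_mono q0).
move=> v /=; rewrite in_itv /= => /andP[v1 v2].
exists (Jinv q v); last exact: JK.
rewrite in_itv /= -(J_mono q0 (x - 1)) -(J_mono q0 _ (x + 1)) JK //.
by rewrite v1 v2.
Qed.

Section Grid.
Variables (R : realType) (d : nat).

Lemma gridpt_entry (h : R) (a : 'rV[int]_d) i :
  gridpt h a ord0 i = h * (a ord0 i)%:~R.
Proof. by rewrite /gridpt !mxE. Qed.

Lemma enorm_ge0 (x : 'rV[R]_d) : 0 <= enorm x.
Proof. exact: sqrtr_ge0. Qed.

Lemma enorm_entry (x : 'rV[R]_d) i : x ord0 i ^+ 2 <= enorm x ^+ 2.
Proof.
rewrite /enorm sqr_sqrtr; last by apply: sumr_ge0 => j _; exact: sqr_ge0.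
rewrite (bigD1 i) //= lerDl; apply: sumr_ge0 => j _; exact: sqr_ge0.
Qed.

Lemma enorm0 : enorm (0 : 'rV[R]_d) = 0.
Proof.
rewrite /enorm (eq_bigr (fun _ => 0)); first by rewrite big1 // sqrtr0.
by move=> i _; rewrite mxE expr0n.
Qed.

Lemma grid0 (h r : R) : 0 < r -> grid_ball h r (0 : 'rV[int]_d).
Proof.
move=> r0; rewrite /grid_ball /= /gridpt.
have -> : map_mx (fun z : int => z%:~R) (0 : 'rV[int]_d) = 0 :> 'rV[R]_d.
  by apply/rowP => i; rewrite !mxE.
by rewrite scaler0 enorm0.
Qed.

Lemma grid_finite (h r : R) : 0 < h -> finite_set (grid_ball (d:=d) h r).
Proof.
move=> h0.
set N := Num.Def.archi_bound (`|r| / h).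
have hN : `|r| / h < N%:R by exact: unstable.ltr_bound.
have bnd : forall a : 'rV[int]_d, grid_ball h r a -> forall i,
    - (N%:Z) < a ord0 i /\ a ord0 i < N%:Z.
  move=> a ha i; rewrite /grid_ball /= in ha.
  have e := enorm_entry (gridpt h a) i.
  rewrite gridpt_entry in e.
  have en := enorm_ge0 (gridpt h a).
  set z : R := (a ord0 i)%:~R in e.
  have hz : - `|r| < h * z < `|r|.
    have rr : r <= `|r| by exact: ler_norm.
    have hy : `|h * z| <= enorm (gridpt h a).
      by rewrite -(ler_sqr (R:=R)) ?nnegrE ?normr_ge0 // real_normK ?num_real.
    have : `|h * z| < `|r| by lra.
    by rewrite ltr_norml.
  have hN' : `|r| < h * N%:R by rewrite -ltr_pdivrMl // mulrC.
  split; rewrite -(ltr_int R).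
    rewrite mulrNz /=; move: hz => /andP[hz1 _].
    have : - (h * N%:R) < h * z by lra.
    rewrite -mulrN ltr_pM2l //; rewrite /z; by [].
  move: hz => /andP[_ hz2].
  have : h * z < h * N%:R by lra.
  by rewrite ltr_pM2l.
pose F (k : {ffun 'I_d -> 'I_(N + N).+1}) : 'rV[int]_d :=
  \row_i ((k i : nat)%:Z - N%:Z).
apply: (@sub_finite_set _ _ [set F k | k in [set: {ffun 'I_d -> 'I_(N + N).+1}]]);
  last exact: finite_image.
move=> a ha; exists [ffun i => inord (absz (a ord0 i + N%:Z)%R)] => //.
apply/rowP => i; rewrite !mxE ffunE.
have [b1 b2] := bnd a ha i.
rewrite inordK; last by lia.
rewrite gez0_abs; last by lia.
by rewrite addrK.
Qed.

End Grid.

Lemma in_Omega_r (R : realType) d (Omega : set 'rV[R]_d) (r : R) x y :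
  Omega x -> enorm y < r -> Omega_r Omega r (x + y).
Proof.
move=> Ox yr; rewrite /Omega_r.
case: (pselect (Omega (x + y))) => H; [by left | right; split => //].
rewrite /edist.
have : inf [set enorm (x + y - z) | z in Omega] <= enorm y.
  apply: ge_inf.
    by exists 0 => _ [z _ <-]; exact: enorm_ge0.
  by exists x => //; rewrite addrAC subrr add0r.
lra.
Qed.

Lemma f_bounded (R : realType) d (Omega : set 'rV[R]_d) (f : 'rV[R]_d -> R) :
  bounded_set Omega -> {within closure Omega, continuous f} ->
  exists F : R, forall x, Omega x -> `|f x| <= F.
Proof.
move=> bO cf.
case: bO => M [_ HM].
set M' := `|M| + 1.
have hM : forall y, Omega y -> `|y| <= M'.
  move=> y Oy; apply: (HM M'); last exact: Oy.
  rewrite /M'; have := ler_norm M; lra.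
have M0 : 0 < M' by rewrite /M'; have := normr_ge0 M; lra.
have sub : closure Omega `<=` closed_ball (0 : 'rV[R]_d) M'.
  have E := (closure_id _).1 (@closed_ball_closed _ _ (0:'rV[R]_d) M').
  rewrite [X in _ `<=` X]E; apply: closureS.
  move=> y Oy; rewrite closed_ballE //= /closed_ball_ /=.
  by rewrite distrC subr0; exact: hM.
have cb : bounded_set (closure Omega).
  exists M'; split; first exact: num_real.
  move=> N NM y /sub; rewrite closed_ballE // /closed_ball_ /= distrC subr0 => hy.
  rewrite /=; lra.
have cK : compact (closure Omega) := bounded_closed_compact cb (@closed_closure _ Omega).
have := compact_bounded (continuous_compact cf cK).
case => F [_ HF]; exists (F + 1) => x Ox.
apply: (HF (F + 1)); first lra.
by exists x => //; exact: subset_closure.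
Qed.

Lemma Jsub_cont (R : realType) (q c : R) : 0 < q -> continuous (fun t => J q (c - t)).
Proof.
move=> q0 t.
apply: (@continuous_comp _ _ _ (fun t => c - t) (J q)); last exact: J_cont.
by apply: cvgB; [exact: cvg_cst | exact: cvg_id].
Qed.

Lemma sum_cont (R : realType) (I : Type) (q : R) (l : seq I) (c : I -> R) :
  0 < q -> continuous (fun t => \sum_(a <- l) J q (c a - t)).
Proof.
move=> q0; elim: l => [|a l IH].
  under eq_fun do rewrite big_nil; exact: cst_continuous.
under eq_fun do rewrite big_cons.
move=> t; apply: (@continuousD _ _ _ (fun t => J q (c a - t))
  (fun t => \sum_(a <- l) J q (c a - t))); [exact: Jsub_cont | exact: IH].
Qed.

Theorem lemma4p3 (R : realType) (d : nat) (Omega : set 'rV[R]_d)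
  (f : 'rV[R]_d -> R) (c p r h : R) (phi : 'rV[R]_d -> R) :
  open Omega -> bounded_set Omega ->
  {within closure Omega, continuous f} ->
  0 < c -> 1 < p -> 0 < r -> 0 < h ->
  (exists M : R, forall x, Omega_r Omega r x -> `|phi x| <= M) ->
  (* (a) existence and uniqueness of a bounded solution *)
  ((exists psi : 'rV[R]_d -> R,
      (exists M : R, forall x, Omega x -> `|psi x| <= M) /\
      (forall x, Omega x -> - Lop c p r h psi phi x = f x)) /\
   (forall psi1 psi2 : 'rV[R]_d -> R,
      (exists M : R, forall x, Omega x -> `|psi1 x| <= M) ->
      (exists M : R, forall x, Omega x -> `|psi2 x| <= M) ->
      (forall x, Omega x -> - Lop c p r h psi1 phi x = f x) ->
      (forall x, Omega x -> - Lop c p r h psi2 phi x = f x) ->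
      forall x, Omega x -> psi1 x = psi2 x)) /\
  (* (b) comparison principle *)
  (forall psi1 psi2 : 'rV[R]_d -> R,
      (forall x, Omega x -> - Lop c p r h psi1 phi x <= f x) ->
      (forall x, Omega x -> - Lop c p r h psi2 phi x >= f x) ->
      forall x, Omega x -> psi1 x <= psi2 x).
Proof.
move=> oO bO cf c0 p1 r0 h0 [B HB].
have q0 : 0 < p - 1 by rewrite subr_gt0.
set q := p - 1 in q0.
set A := grid_ball (d:=d) h r.
have fA : finite_set A := @grid_finite R d h r h0.
set s := finmap.enum_fset (fset_set A).
have inA : forall a, a \in s -> A a.
  by move=> a; move: (in_fset_set fA a) => /= -> /set_mem.
have s0 : (0 : 'rV[int]_d) \in s.
  by move: (in_fset_set fA 0) => /= ->; apply: mem_set; exact: grid0.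
set K := h ^+ d / (c * powR r (p + d%:R)).
have K0 : 0 < K.
  by rewrite /K divr_gt0 ?exprn_gt0 // mulr_gt0 // powR_gt0.
pose S x t := \sum_(a <- s) J q (phi (x + gridpt h a) - t).
have LopE : forall psi x, Lop c p r h psi phi x = K * S x (psi x).
  move=> psi x; rewrite /Lop fsbig_finite //; congr (_ * _).
  by apply: eq_bigr => a _; exact: Jp_J.
have Ssplit : forall x t, S x t = J q (phi (x + gridpt h 0) - t) +
    \sum_(a <- rem 0 s) J q (phi (x + gridpt h a) - t).
  by move=> x t; rewrite /S (big_rem _ s0).
have S_lt : forall x t t', t < t' -> S x t' < S x t.
  move=> x t t' tt; rewrite !Ssplit; apply: ltr_leD.
    by apply: J_lt => //; lra.
  by apply: ler_sum => a _; apply: J_le => //; lra.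
have partb : forall psi1 psi2 : 'rV[R]_d -> R,
      (forall x, Omega x -> - Lop c p r h psi1 phi x <= f x) ->
      (forall x, Omega x -> - Lop c p r h psi2 phi x >= f x) ->
      forall x, Omega x -> psi1 x <= psi2 x.
  move=> psi1 psi2 H1 H2 x Ox; rewrite leNgt; apply/negP => lt.
  have := S_lt x _ _ lt; have := H1 x Ox; have := H2 x Ox.
  rewrite !LopE => a1 a2 a3.
  have : K * S x (psi1 x) < K * S x (psi2 x) by rewrite ltr_pM2l.
  lra.
split; last exact: partb.
split; last first.
  move=> psi1 psi2 _ _ H1 H2 x Ox; apply: le_anti; apply/andP; split.
    by apply: (partb psi1 psi2) => // y Oy; [rewrite H1 | rewrite H2].
  by apply: (partb psi2 psi1) => // y Oy; [rewrite H2 | rewrite H1].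
have [F HF] := f_bounded bO cf.
set T := powR (`|F| / K) q^-1.
have T0 : 0 <= T := powR_ge0 _ _.
have PT : powR T q = `|F| / K.
  by rewrite /T -powRrM mulVf ?gt_eqF // powRr1 // divr_ge0 // ltW.
set hi := `|B| + T.
have hi0 : 0 <= hi by rewrite /hi; have := normr_ge0 B; lra.
have phiB : forall x a, Omega x -> a \in s ->
    - `|B| <= phi (x + gridpt h a) /\ phi (x + gridpt h a) <= `|B|.
  move=> x a Ox ha; have := HB _ (in_Omega_r (y := gridpt h a) Ox (inA a ha)).
  rewrite ler_norml => /andP[l1 l2]; have := ler_norm B; split; lra.
have KP : K * powR T q = `|F| by rewrite PT mulrC divfK ?gt_eqF.
have P0 : 0 <= powR T q := powR_ge0 _ _.
have Shi : forall x, Omega x -> S x hi <= - powR T q.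
  move=> x Ox; rewrite Ssplit.
  have b : forall a, a \in s -> J q (phi (x + gridpt h a) - hi) <= - powR T q.
    move=> a ha; rewrite -J_neg //; apply: J_le => //.
    have [l u] := phiB x a Ox ha; rewrite /hi; lra.
  have : \sum_(a <- rem 0 s) J q (phi (x + gridpt h a) - hi) <= 0.
    rewrite big_seq; apply: sumr_le0 => a ha; have := b a (mem_rem ha); lra.
  have := b 0 s0; lra.
have Slo : forall x, Omega x -> powR T q <= S x (- hi).
  move=> x Ox; rewrite Ssplit.
  have b : forall a, a \in s -> powR T q <= J q (phi (x + gridpt h a) - - hi).
    move=> a ha; rewrite -J_pos //; apply: J_le => //.
    have [l u] := phiB x a Ox ha; rewrite /hi; lra.
  have : 0 <= \sum_(a <- rem 0 s) J q (phi (x + gridpt h a) - - hi).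
    rewrite big_seq; apply: sumr_ge0 => a ha; have := b a (mem_rem ha); lra.
  have := b 0 s0; lra.
have ex : forall x, exists t, Omega x -> `|t| <= hi /\ - (K * S x t) = f x.
  move=> x; case: (pselect (Omega x)) => Ox; last by exists 0.
  have fx := HF x Ox; have := ler_norm F; have := ler_norm (f x).
  have := normr_ge0 (f x); rewrite ler_norml in fx; move/andP: fx => [fx1 fx2].
  move=> a1 a2 a3.
  have g_lo : - (K * S x (- hi)) <= f x.
    have : K * powR T q <= K * S x (- hi) by rewrite ler_pM2l // Slo.
    lra.
  have g_hi : f x <= - (K * S x hi).
    have : K * S x hi <= K * (- powR T q) by rewrite ler_pM2l // Shi.
    lra.
  have lohi : - hi <= hi by lra.
  have cg : {within `[- hi, hi], continuous (fun t => - (K * S x t))}.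
    apply: continuous_subspaceT => t'.
    have := @sum_cont R _ q s (fun a => phi (x + gridpt h a)) q0 t'.
    move=> H; apply: cvgN; apply: cvgMr; exact: H.
  have mm : Num.min (- (K * S x (- hi))) (- (K * S x hi)) <= f x <=
            Num.max (- (K * S x (- hi))) (- (K * S x hi)).
    by apply/andP; split; [rewrite ge_min g_lo | rewrite le_max g_hi orbT].
  have [t tin gt] := IVT lohi cg mm.
  exists t => _; split => //; rewrite ler_norml; move: tin; rewrite in_itv /=.
  by [].
case: (choice ex) => psi Hpsi.
exists psi; split.
  by exists hi => x Ox; have [] := Hpsi x Ox.
by move=> x Ox; rewrite LopE; have [] := Hpsi x Ox.
Qed.
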